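(* There is a bounded open subset $B_G$ of $X_G$ (with the topology induced from $C^1$), with $\phi(t)>0$ for all $\phi\in B_G$ and $t\in[-r,0]$, such that for every $\phi\in X_G$ there exists $t(\phi)\ge 0$ with $S_G(t,\phi)\in B_G$ for all $t\ge t(\phi)$.
   Context: Constants $\beta,\mu,\gamma,a>0$. The function $g:\mathbb{R}\to(0,\infty)$ is continuously differentiable with $0<\inf g(\mathbb{R})\le \sup g(\mathbb{R})<\infty$. The function $v:\mathbb{R}\to\mathbb{R}$ is continuously differentiable with $0<v_0\le v(x)\le v_U$ for all $x$. Fix $r>a/v_0$; $C^1=C^1([-r,0],\mathbb{R})$ with norm $|\phi|_1=\max|\phi|+\max|\phi'|$. Segments: $x_t(s)=x(t+s)$, $s\in[-r,0]$. For $\phi\in C([-r,0],\mathbb{R})$ let $\delta(\phi)$ be the unique $u\in(0,r)$ with $a=\int_{-u}^0 v(\phi(s))\,ds$. Define $G:C^1\to\mathbb{R}$ by $G(\phi)=\beta e^{-\mu\delta(\phi)}\frac{v(\phi(0))}{v(\phi(-\delta(\phi)))}g(\phi(-\delta(\phi)))-\gamma\phi(0)$, and $X_G=\{\phi\in C^1:\phi'(0)=G(\phi)\}$ (a closed $C^1$-submanifold of codimension 1 of $C^1$). Each $\phi\in X_G$ determines a unique maximal continuously differentiable solution $x^\phi$ of $x'(t)=G(x_t)$ for $t>0$, $x_0=\phi$, which exists for all $t\ge 0$, and $S_G(t,\phi)=x^\phi_t$ defines the associated semiflow on $X_G$. *)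

(* Defs.v *)
From Stdlib Require Import Reals Lra ClassicalEpsilon.
From Coquelicot Require Import Coquelicot.
Open Scope R_scope.

Definition deriv_within (D : R -> Prop) (f : R -> R) (x l : R) : Prop :=
  forall eps, 0 < eps -> exists del, 0 < del /\
    forall y, D y -> Rabs (y - x) < del ->
      Rabs (f y - f x - l * (y - x)) <= eps * Rabs (y - x).

Definition cont_within (D : R -> Prop) (f : R -> R) (x : R) : Prop :=
  forall eps, 0 < eps -> exists del, 0 < del /\
    forall y, D y -> Rabs (y - x) < del -> Rabs (f y - f x) < eps.

Definition C1_on (D : R -> Prop) (f df : R -> R) : Prop :=
  (forall x, D x -> cont_within D df x) /\
  (forall x, D x -> deriv_within D f x (df x)).

Definition Iseg (r : R) : R -> Prop := fun s => - r <= s <= 0.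

Definition C1seg (r : R) (phi : R -> R) : Prop :=
  exists dphi, C1_on (Iseg r) phi dphi.

(* The derivative phi' on [-r,0] (unique there since r > 0). *)
Definition dseg (r : R) (phi : R -> R) : R -> R :=
  fun s => epsilon (inhabits 0) (fun l => deriv_within (Iseg r) phi s l).

(* |phi|_1 = max|phi| + max|phi'| <= M  (maxima over [-r,0]). *)
Definition norm1_le (r : R) (phi : R -> R) (M : R) : Prop :=
  forall s s', Iseg r s -> Iseg r s' ->
    Rabs (phi s) + Rabs (dseg r phi s') <= M.

Definition delta (v : R -> R) (a r : R) (phi : R -> R) : R :=
  epsilon (inhabits 0)
    (fun u => 0 < u < r /\ RInt (fun s => v (phi s)) (- u) 0 = a).

Definition Gfun (beta mu gamma a r : R) (g v : R -> R) (phi : R -> R) : R :=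
  let d := delta v a r phi in
  beta * exp (- mu * d) * (v (phi 0) / v (phi (- d))) * g (phi (- d))
  - gamma * phi 0.

Definition XG (beta mu gamma a r : R) (g v : R -> R) (phi : R -> R) : Prop :=
  C1seg r phi /\ deriv_within (Iseg r) phi 0 (Gfun beta mu gamma a r g v phi).

Definition segment (x : R -> R) (t : R) : R -> R := fun s => x (t + s).

Definition is_solution (beta mu gamma a r : R) (g v : R -> R)
    (phi x : R -> R) : Prop :=
  (forall s, Iseg r s -> x s = phi s) /\
  exists dx, C1_on (fun s => - r <= s) x dx /\
    forall t, 0 < t -> dx t = Gfun beta mu gamma a r g v (segment x t).

(* Main.v *)
Require Import Defs.
From Stdlib Require Import Reals Lra ClassicalEpsilon.
From Coquelicot Require Import Coquelicot.
Open Scope R_scope.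

Lemma dw_interior (D : R -> Prop) f p l rho :
  0 < rho -> (forall y, Rabs (y - p) < rho -> D y) ->
  deriv_within D f p l -> derivable_pt_lim f p l.
Proof.
  intros Hr HD H eps He.
  destruct (H (eps/2) ltac:(lra)) as [del [Hd Hy]].
  assert (Hm : 0 < Rmin del rho) by (apply Rmin_pos; lra).
  exists (mkposreal _ Hm). intros h Hh0 Hh. simpl in Hh.
  assert (Hh1 : Rabs h < del) by (eapply Rlt_le_trans; [exact Hh| apply Rmin_l]).
  assert (Hh2 : Rabs h < rho) by (eapply Rlt_le_trans; [exact Hh| apply Rmin_r]).
  assert (E : p + h - p = h) by ring.
  specialize (Hy (p+h)). rewrite E in Hy.
  specialize (Hy (HD _ ltac:(rewrite E; exact Hh2)) Hh1).
  assert (Hpos : 0 < Rabs h) by (apply Rabs_pos_lt; exact Hh0).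
  replace ((f (p + h) - f p) / h - l) with ((f (p + h) - f p - l * h) / h) by (field; exact Hh0).
  rewrite Rabs_div by exact Hh0.
  apply (Rmult_lt_reg_r (Rabs h)); [exact Hpos|].
  unfold Rdiv. rewrite Rmult_assoc, Rinv_l by lra. nra.
Qed.

Lemma dw_uniq r f s l1 l2 : 0 < r -> Iseg r s ->
  deriv_within (Iseg r) f s l1 -> deriv_within (Iseg r) f s l2 -> l1 = l2.
Proof.
  intros Hr Hs H1 H2.
  destruct (Req_dec l1 l2) as [E|NE]; [exact E|exfalso].
  assert (Hq : 0 < Rabs (l1 - l2)) by (apply Rabs_pos_lt; lra).
  destruct (H1 (Rabs (l1 - l2)/4) ltac:(lra)) as [d1 [Hd1 Hy1]].
  destruct (H2 (Rabs (l1 - l2)/4) ltac:(lra)) as [d2 [Hd2 Hy2]].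
  set (h := Rmin (Rmin d1 d2) r / 2).
  assert (Hh : 0 < h).
  { unfold h. assert (0 < Rmin (Rmin d1 d2) r) by (apply Rmin_pos; [apply Rmin_pos|]; lra). lra. }
  assert (Hhd1 : h < d1).
  { unfold h. pose proof (Rmin_l (Rmin d1 d2) r). pose proof (Rmin_l d1 d2).
    assert (0 < Rmin (Rmin d1 d2) r) by (apply Rmin_pos; [apply Rmin_pos|]; lra). lra. }
  assert (Hhd2 : h < d2).
  { unfold h. pose proof (Rmin_l (Rmin d1 d2) r). pose proof (Rmin_r d1 d2).
    assert (0 < Rmin (Rmin d1 d2) r) by (apply Rmin_pos; [apply Rmin_pos|]; lra). lra. }
  assert (Hhr : h <= r/2) by (unfold h; pose proof (Rmin_r (Rmin d1 d2) r); lra).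
  unfold Iseg in Hs.
  assert (Hy : exists y, Iseg r y /\ Rabs (y - s) = h).
  { destruct (Rle_dec s (-r/2)).
    - exists (s + h). split; [unfold Iseg; lra|]. replace (s + h - s) with h by ring. apply Rabs_right; lra.
    - exists (s - h). split; [unfold Iseg; lra|]. replace (s - h - s) with (-h) by ring.
      rewrite Rabs_Ropp. apply Rabs_right; lra. }
  destruct Hy as [y [Hy Hys]].
  specialize (Hy1 y Hy ltac:(lra)). specialize (Hy2 y Hy ltac:(lra)).
  assert (E : (l1 - l2) * (y - s) = (f y - f s - l2 * (y - s)) - (f y - f s - l1 * (y - s))) by ring.
  assert (Rabs ((l1 - l2) * (y - s)) <= Rabs (f y - f s - l2 * (y - s)) + Rabs (f y - f s - l1 * (y - s))).
  { rewrite E. unfold Rminus at 1. eapply Rle_trans; [apply Rabs_triang|]. rewrite Rabs_Ropp. lra. }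
  rewrite Rabs_mult, Hys in H. rewrite Hys in Hy1, Hy2. nra.
Qed.

Lemma dseg_eq r f s l : 0 < r -> Iseg r s -> deriv_within (Iseg r) f s l -> dseg r f s = l.
Proof.
  intros Hr Hs H. unfold dseg.
  apply (dw_uniq r f s); auto.
  apply (epsilon_spec (inhabits 0) (fun l0 => deriv_within (Iseg r) f s l0)). exists l; exact H.
Qed.

Lemma dw_sub D f g s l1 l2 : deriv_within D f s l1 -> deriv_within D g s l2 ->
  deriv_within D (fun y => f y - g y) s (l1 - l2).
Proof.
  intros H1 H2 eps He.
  destruct (H1 (eps/2) ltac:(lra)) as [d1 [Hd1 Hy1]].
  destruct (H2 (eps/2) ltac:(lra)) as [d2 [Hd2 Hy2]].
  exists (Rmin d1 d2). split; [apply Rmin_pos; lra|].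
  intros y Hy Hys.
  specialize (Hy1 y Hy ltac:(eapply Rlt_le_trans; [exact Hys|apply Rmin_l])).
  specialize (Hy2 y Hy ltac:(eapply Rlt_le_trans; [exact Hys|apply Rmin_r])).
  replace (f y - g y - (f s - g s) - (l1 - l2) * (y - s)) with
    ((f y - f s - l1 * (y - s)) + - (g y - g s - l2 * (y - s))) by ring.
  eapply Rle_trans; [apply Rabs_triang|]. rewrite Rabs_Ropp. lra.
Qed.

Lemma dw_shift r x t s l : 0 <= t -> deriv_within (fun z => - r <= z) x (t + s) l ->
  deriv_within (Iseg r) (segment x t) s l.
Proof.
  intros Ht H eps He. destruct (H eps He) as [d [Hd Hy]]. exists d; split; auto.
  intros y Hy' Hys. unfold segment, Iseg in *.
  replace (y - s) with (t + y - (t + s)) by ring.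
  apply Hy; [lra|]. replace (t + y - (t + s)) with (y - s) by ring. exact Hys.
Qed.

Lemma cw_shift r dx t s : 0 <= t -> cont_within (fun z => - r <= z) dx (t + s) ->
  cont_within (Iseg r) (fun s => dx (t + s)) s.
Proof.
  intros Ht H eps He. destruct (H eps He) as [d [Hd Hy]]. exists d; split; auto.
  intros y Hy' Hys. unfold Iseg in *.
  apply Hy; [lra|]. replace (t + y - (t + s)) with (y - s) by ring. exact Hys.
Qed.

Lemma int_ivt (f : R -> R) (r a v0 : R) : 0 < a -> 0 < v0 -> a / v0 < r ->
  (forall s, - r <= s -> continuous f s) -> (forall s, v0 <= f s) ->
  exists u, 0 < u < r /\ RInt f (- u) 0 = a.
Proof.
  intros Ha Hv Hr Hc Hf.
  assert (Har : 0 < a / v0) by (apply Rdiv_lt_0_compat; lra).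
  set (r' := (a / v0 + r) / 2).
  assert (Hr1 : a / v0 < r') by (unfold r'; lra).
  assert (Hr2 : r' < r) by (unfold r'; lra).
  assert (Hex : forall w, - r <= w -> ex_RInt f w 0).
  { intros w Hw. apply (ex_RInt_continuous (V:=R_CompleteNormedModule)). intros z Hz. apply Hc.
    pose proof (Rmin_glb w 0 (-r) ltac:(lra) ltac:(lra)). lra. }
  assert (Hcont : forall w, - r' <= w <= 0 -> continuity_pt (fun w => a - RInt f w 0) w).
  { intros w Hw. apply continuity_pt_minus; [apply continuity_pt_const; intros ??; reflexivity|].
    apply continuity_pt_filterlim.
    apply (continuous_RInt_2 f w 0).
    assert (Hp : 0 < r - r') by lra.
    exists (mkposreal _ Hp). intros y Hy.
    apply (RInt_correct (V:=R_CompleteNormedModule)). apply Hex.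
    unfold ball in Hy; simpl in Hy; unfold AbsRing_ball, abs, minus, plus, opp in Hy; simpl in Hy.
    apply Rabs_def2 in Hy. lra. }
  assert (Hlow : a < RInt f (- r') 0).
  { assert (RInt (fun _ => v0) (- r') 0 <= RInt f (- r') 0).
    { apply RInt_le; [lra| apply ex_RInt_const | apply Hex; lra | intros; apply Hf]. }
    rewrite RInt_const in H. unfold scal in H; simpl in H; unfold mult in H; simpl in H.
    apply Rmult_lt_compat_r with (r := v0) in Hr1; [|lra].
    unfold Rdiv in Hr1. rewrite Rmult_assoc, Rinv_l in Hr1 by lra. lra. }
  destruct (Ranalysis5.IVT_interv (fun w => a - RInt f w 0) (- r') 0) as [z [Hz Hz0]].
  - exact Hcont.
  - lra.
  - cbv beta. lra.
  - cbv beta. rewrite RInt_point. unfold zero; simpl. lra.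
  - exists (- z). split.
    + split; [|lra]. destruct (Req_dec z 0) as [E|E]; [|lra].
      rewrite E, RInt_point in Hz0. unfold zero in Hz0; simpl in Hz0. lra.
    + rewrite Ropp_involutive. lra.
Qed.

Lemma div_bounds p q P Q : 0 < p <= P -> 0 < q <= Q -> p / Q <= P / q.
Proof.
  intros [H1 H2] [H3 H4]. unfold Rdiv. apply Rmult_le_compat; try lra.
  - left; apply Rinv_0_lt_compat; lra.
  - apply Rinv_le_contravar; lra.
Qed.

Lemma ode_mono (x dx : R -> R) gamma c : 0 < gamma ->
  (forall t, 0 < t -> is_derive x t (dx t)) ->
  (forall t, 0 < t -> c <= dx t + gamma * x t) ->
  forall t, 1 <= t -> (x 1 - c / gamma) * exp (gamma * 1) <= (x t - c / gamma) * exp (gamma * t).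
Proof.
  intros Hg Hd Hc.
  set (y := fun t => (x t - c / gamma) * exp (gamma * t)).
  assert (Hdy : forall t, 0 < t -> is_derive y t ((dx t + gamma * x t - c) * exp (gamma * t))).
  { intros t Ht.
    assert (Hx' : is_derive (fun t => x t - c / gamma) t (dx t)).
    { pose proof (derivable_pt_lim_minus x (fun _ => c / gamma) t (dx t) 0
        (proj1 (is_derive_Reals _ _ _) (Hd t Ht)) (derivable_pt_lim_const _ _)) as H.
      rewrite Rminus_0_r in H. apply is_derive_Reals. exact H. }
    assert (He : is_derive (fun t => exp (gamma * t)) t (gamma * exp (gamma * t))).
    { auto_derive; [auto| ring]. }
    replace ((dx t + gamma * x t - c) * exp (gamma * t)) with
      (plus (mult (dx t) (exp (gamma * t))) (mult (x t - c / gamma) (gamma * exp (gamma * t)))).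
    2:{ unfold plus, mult; simpl. field. lra. }
    apply (is_derive_mult (fun t => x t - c / gamma) (fun t => exp (gamma * t))); auto.
    intros; apply Rmult_comm. }
  intros t Ht.
  destruct (Rle_lt_or_eq_dec 1 t Ht) as [Hlt|Heq]; [|subst t; lra].
  fold (y 1) (y t).
  destruct (Rle_dec (y 1) (y t)) as [OK|NO]; [exact OK|exfalso].
  set (eps := (y 1 - y t) / t).
  assert (Heps : 0 < eps) by (unfold eps; apply Rdiv_lt_0_compat; lra).
  assert (Hi : y 1 + eps * 1 < y t + eps * t).
  { apply (incr_function (fun s => y s + eps * s) (Finite 0) p_infty (fun s => (dx s + gamma * x s - c) * exp (gamma * s) + eps)).
    - intros s Hs _. simpl in Hs.
      apply (is_derive_plus y (fun s => eps * s)); [apply Hdy; exact Hs|].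
      auto_derive; [auto|ring].
    - intros s Hs _. simpl in Hs. pose proof (Hc s Hs). pose proof (exp_pos (gamma * s)).
      apply Rlt_gt. assert (0 <= (dx s + gamma * x s - c) * exp (gamma * s)) by (apply Rmult_le_pos; lra). lra.
    - simpl; lra.
    - exact Hlt.
    - simpl; exact I. }
  assert (E : eps * t = y 1 - y t) by (unfold eps; field; lra).
  lra.
Qed.

Lemma ode_bound (x dx : R -> R) gamma c : 0 < gamma ->
  (forall t, 0 < t -> is_derive x t (dx t)) ->
  (forall t, 0 < t -> c <= dx t + gamma * x t) ->
  forall d, 0 < d -> exists T, 1 <= T /\ forall t, T <= t -> c / gamma - d <= x t.
Proof.
  intros Hg Hd Hc d Hd0.
  set (A := Rabs (x 1 - c / gamma)).
  exists (1 + (A + 1) / (d * gamma)). split.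
  { assert (0 < (A + 1) / (d * gamma)).
    { apply Rdiv_lt_0_compat; [unfold A; pose proof (Rabs_pos (x 1 - c / gamma)); lra| nra]. }
    lra. }
  intros t Ht.
  assert (Hq : 0 <= (A + 1) / (d * gamma)).
  { left; apply Rdiv_lt_0_compat; [unfold A; pose proof (Rabs_pos (x 1 - c / gamma)); lra| nra]. }
  pose proof (ode_mono x dx gamma c Hg Hd Hc t ltac:(lra)) as Hm.
  assert (Eexp : exp (gamma * t) = exp (gamma * 1) * exp (gamma * (t - 1))).
  { rewrite <- exp_plus. f_equal. ring. }
  rewrite Eexp in Hm.
  set (E := exp (gamma * (t - 1))) in *.
  pose proof (exp_pos (gamma * 1)) as Hp1.
  assert (HE : (A + 1) / d < E).
  { assert (Ht1 : 0 < t - 1) by (assert (0 < (A + 1) / (d * gamma)) by (apply Rdiv_lt_0_compat; [unfold A; pose proof (Rabs_pos (x 1 - c / gamma)); lra| nra]); lra).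
    assert (Hgt : 0 < gamma * (t - 1)) by (apply Rmult_lt_0_compat; lra).
    unfold E. eapply Rle_lt_trans; [|apply exp_ineq1; lra].
    assert (gamma * (t - 1) >= gamma * ((A + 1) / (d * gamma))) by nra.
    replace (gamma * ((A + 1) / (d * gamma))) with ((A + 1) / d) in H by (field; lra). lra. }
  assert (HEp : 0 < E) by (unfold E; apply exp_pos).
  assert (Hm2 : x 1 - c / gamma <= (x t - c / gamma) * E).
  { apply (Rmult_le_reg_l (exp (gamma * 1))); [exact Hp1|]. nra. }
  assert (HA : - A <= x 1 - c / gamma) by (unfold A; pose proof (Rabs_pos (x 1 - c / gamma));
     destruct (Rcase_abs (x 1 - c / gamma)); [rewrite Rabs_left by lra | rewrite Rabs_right by lra]; lra).
  assert (HAd : A + 1 < d * E).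
  { apply (Rmult_lt_compat_l d) in HE; [|lra]. replace (d * ((A + 1) / d)) with (A + 1) in HE by (field; lra). lra. }
  destruct (Rle_dec (c / gamma - d) (x t)) as [OK|NO]; [exact OK|exfalso].
  assert ((x t - c / gamma) * E < - d * E) by (apply Rmult_lt_compat_r; lra).
  lra.
Qed.

Lemma delta_ok (v : R -> R) a r v0 phi : 0 < a -> 0 < v0 -> a / v0 < r ->
  (forall s, - r <= s -> continuous (fun s => v (phi s)) s) -> (forall y, v0 <= v y) ->
  0 < delta v a r phi < r.
Proof.
  intros Ha Hv Hr Hc Hb.
  destruct (int_ivt (fun s => v (phi s)) r a v0 Ha Hv Hr Hc (fun s => Hb (phi s))) as [u Hu].
  unfold delta.
  pose proof (epsilon_spec (inhabits 0) (fun u => 0 < u < r /\ RInt (fun s => v (phi s)) (- u) 0 = a) (ex_intro _ u Hu)) as H.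
  exact (proj1 H).
Qed.

Lemma Gbound beta mu gamma a r (g v : R -> R) v0 vU m Mg phi :
  0 < beta -> 0 < mu -> 0 < v0 -> (forall x, v0 <= v x <= vU) -> 0 < m ->
  (forall x, m <= g x <= Mg) -> 0 < delta v a r phi < r ->
  beta * exp (- mu * r) * (v0 / vU) * m <= Gfun beta mu gamma a r g v phi + gamma * phi 0
  <= beta * (vU / v0) * Mg.
Proof.
  intros Hb Hmu Hv0 Hv Hm Hg Hd.
  unfold Gfun. set (d := delta v a r phi) in *.
  replace (beta * exp (- mu * d) * (v (phi 0) / v (phi (- d))) * g (phi (- d)) - gamma * phi 0 + gamma * phi 0)
    with (beta * exp (- mu * d) * (v (phi 0) / v (phi (- d))) * g (phi (- d))) by ring.
  pose proof (Hv (phi 0)). pose proof (Hv (phi (- d))). pose proof (Hg (phi (- d))).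
  assert (E1 : exp (- mu * r) <= exp (- mu * d)) by (left; apply exp_increasing; nra).
  assert (E2 : exp (- mu * d) <= 1) by (rewrite <- exp_0; left; apply exp_increasing; nra).
  pose proof (exp_pos (- mu * r)).
  assert (R1 : v0 / vU <= v (phi 0) / v (phi (- d))) by (apply div_bounds; lra).
  assert (R2 : v (phi 0) / v (phi (- d)) <= vU / v0) by (apply div_bounds; lra).
  assert (0 < v0 / vU) by (apply Rdiv_lt_0_compat; lra).
  split.
  - apply Rmult_le_compat; try lra.
    + apply Rmult_le_pos; [|lra]. apply Rmult_le_pos; lra.
    + apply Rmult_le_compat; try lra; [apply Rmult_le_pos; lra | apply Rmult_le_compat_l; lra].
  - pose proof (exp_pos (- mu * d)).
    assert (0 < v (phi 0) / v (phi (- d))) by (apply Rdiv_lt_0_compat; lra).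
    assert (A1 : exp (- mu * d) * (v (phi 0) / v (phi (- d))) <= 1 * (vU / v0))
      by (apply Rmult_le_compat; lra).
    assert (A2 : exp (- mu * d) * (v (phi 0) / v (phi (- d))) * g (phi (- d)) <= 1 * (vU / v0) * Mg)
      by (apply Rmult_le_compat; try lra; apply Rmult_le_pos; lra).
    replace (beta * exp (- mu * d) * (v (phi 0) / v (phi (- d))) * g (phi (- d))) with
      (beta * (exp (- mu * d) * (v (phi 0) / v (phi (- d))) * g (phi (- d)))) by ring.
    replace (beta * (vU / v0) * Mg) with (beta * (1 * (vU / v0) * Mg)) by ring.
    apply Rmult_le_compat_l; lra.
Qed.

Theorem corollary3p3 (beta mu gamma a : R) (g v : R -> R) (v0 vU r : R) :
  0 < beta -> 0 < mu -> 0 < gamma -> 0 < a ->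
  (exists dg : R -> R, (forall x, derivable_pt_lim g x (dg x)) /\ continuity dg) ->
  (exists m M, 0 < m /\ forall x, m <= g x <= M) ->
  (exists dv : R -> R, (forall x, derivable_pt_lim v x (dv x)) /\ continuity dv) ->
  0 < v0 -> (forall x, v0 <= v x <= vU) ->
  a / v0 < r ->
  exists B : (R -> R) -> Prop,
    (* B is a subset of X_G *)
    (forall phi, B phi -> XG beta mu gamma a r g v phi) /\
    (* B is open in X_G (topology induced by |.|_1) *)
    (forall phi, B phi -> exists eps, 0 < eps /\
       forall psi, XG beta mu gamma a r g v psi ->
         norm1_le r (fun s => psi s - phi s) eps -> B psi) /\
    (* B is bounded in C^1 *)
    (exists M, forall phi, B phi -> norm1_le r phi M) /\
    (* positivity *)
    (forall phi, B phi -> forall s, Iseg r s -> 0 < phi s) /\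
    (* B absorbs every trajectory of the semiflow S_G *)
    (forall phi, XG beta mu gamma a r g v phi ->
       forall x, is_solution beta mu gamma a r g v phi x ->
         exists T, 0 <= T /\ forall t, T <= t -> B (segment x t)).
Proof.
  intros Hb Hmu Hga Ha _ [m [Mg [Hm Hgb]]] [dv [Hdv _]] Hv0 Hvb Hr.
  assert (HvU : v0 <= vU) by (pose proof (Hvb 0); lra).
  assert (HMg : m <= Mg) by (pose proof (Hgb 0); lra).
  assert (Hr0 : 0 < r) by (assert (0 < a / v0) by (apply Rdiv_lt_0_compat; lra); lra).
  set (c1 := beta * exp (- mu * r) * (v0 / vU) * m).
  set (c2 := beta * (vU / v0) * Mg).
  assert (Hc1 : 0 < c1).
  { unfold c1. pose proof (exp_pos (- mu * r)). assert (0 < v0 / vU) by (apply Rdiv_lt_0_compat; lra).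
    apply Rmult_lt_0_compat; [|lra]. apply Rmult_lt_0_compat; [|lra]. apply Rmult_lt_0_compat; lra. }
  assert (Hc2 : 0 < c2).
  { unfold c2. assert (0 < vU / v0) by (apply Rdiv_lt_0_compat; lra).
    apply Rmult_lt_0_compat; [|lra]. apply Rmult_lt_0_compat; lra. }
  set (L := c1 / (2 * gamma)). set (U := 2 * c2 / gamma). set (K := 3 * c2).
  assert (HL : 0 < L) by (unfold L; apply Rdiv_lt_0_compat; lra).
  exists (fun phi => XG beta mu gamma a r g v phi /\ exists e, 0 < e /\
     forall s, Iseg r s -> L + e <= phi s <= U - e /\ Rabs (dseg r phi s) <= K - e).
  split; [|split; [|split; [|split]]].
  - intros phi [H _]; exact H.
  - intros phi [[[dphi [_ Hdphi]] _] [e [He Hphi]]].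
    exists (e / 2). split; [lra|].
    intros psi Hpsi Hn. split; [exact Hpsi|].
    destruct Hpsi as [[dpsi [_ Hdpsi]] _].
    exists (e / 2). split; [lra|]. intros s Hs.
    specialize (Hn s s Hs Hs). cbv beta in Hn.
    rewrite (dseg_eq r _ s (dpsi s - dphi s) Hr0 Hs (dw_sub _ _ _ _ _ _ (Hdpsi s Hs) (Hdphi s Hs))) in Hn.
    rewrite (dseg_eq r psi s (dpsi s) Hr0 Hs (Hdpsi s Hs)).
    destruct (Hphi s Hs) as [H1 H2].
    rewrite (dseg_eq r phi s (dphi s) Hr0 Hs (Hdphi s Hs)) in H2.
    pose proof (Rabs_pos (psi s - phi s)). pose proof (Rabs_pos (dpsi s - dphi s)).
    split.
    + pose proof (Rle_abs (psi s - phi s)). pose proof (Rle_abs (- (psi s - phi s))) as HO. rewrite Rabs_Ropp in HO. lra.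
    + assert (Rabs (dpsi s - dphi s) <= e / 2) by lra.
      replace (dpsi s) with ((dpsi s - dphi s) + dphi s) by ring.
      eapply Rle_trans; [apply Rabs_triang|]. lra.
  - exists (U + K). intros phi [_ [e [He Hphi]]] s s' Hs Hs'.
    destruct (Hphi s Hs) as [H1 _]. destruct (Hphi s' Hs') as [_ H2].
    rewrite Rabs_right by lra. lra.
  - intros phi [_ [e [He Hphi]]] s Hs. destruct (Hphi s Hs). lra.
  - intros phi _ x [_ [dx [[Hcont Hder] Hode]]].
    assert (Hdx : forall t, 0 < t -> is_derive x t (dx t)).
    { intros t Ht. apply is_derive_Reals.
      apply (dw_interior (fun z => - r <= z) x t (dx t) (t + r)); [lra| |apply Hder; lra].
      intros y Hy. apply Rabs_def2 in Hy. lra. }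
    assert (Hdel : forall t, 0 < t -> 0 < delta v a r (segment x t) < r).
    { intros t Ht. apply (delta_ok v a r v0); auto; [|intros y; apply Hvb].
      intros s Hs. unfold segment.
      apply (continuous_comp (fun s => x (t + s)) v).
      - apply (continuous_comp (fun s => t + s) x).
        + apply (ex_derive_continuous (K:=R_AbsRing) (V:=R_NormedModule)). auto_derive. auto.
        + apply (ex_derive_continuous (K:=R_AbsRing) (V:=R_NormedModule)). exists (dx (t + s)). apply is_derive_Reals.
          apply (dw_interior (fun z => - r <= z) x (t + s) (dx (t + s)) (t + s + r)); [lra| |apply Hder; lra].
          intros y Hy. apply Rabs_def2 in Hy. lra.
      - apply (ex_derive_continuous (K:=R_AbsRing) (V:=R_NormedModule)). exists (dv (x (t + s))). apply is_derive_Reals, Hdv. }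
    assert (HH : forall t, 0 < t -> c1 <= dx t + gamma * x t <= c2).
    { intros t Ht. rewrite (Hode t Ht).
      pose proof (Gbound beta mu gamma a r g v v0 vU m Mg (segment x t) Hb Hmu Hv0 Hvb Hm Hgb (Hdel t Ht)) as G.
      replace (segment x t 0) with (x t) in G by (unfold segment; f_equal; ring). exact G. }
    destruct (ode_bound x dx gamma c1 Hga Hdx (fun t Ht => proj1 (HH t Ht)) (c1 / (4 * gamma)))
      as [T1 [HT1 HB1]]; [apply Rdiv_lt_0_compat; lra|].
    assert (Hdx' : forall t, 0 < t -> is_derive (fun t => - x t) t (- dx t)).
    { intros t Ht. apply is_derive_Reals. apply derivable_pt_lim_opp. apply is_derive_Reals. auto. }
    destruct (ode_bound (fun t => - x t) (fun t => - dx t) gamma (- c2) Hga Hdx'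
       (fun t Ht => ltac:(pose proof (HH t Ht); lra)) (c2 / (2 * gamma)))
      as [T2 [HT2 HB2]]; [apply Rdiv_lt_0_compat; lra|].
    exists (Rmax T1 T2 + r + 1). split.
    { pose proof (Rmax_l T1 T2). lra. }
    intros t Ht.
    assert (Htr : Rmax T1 T2 + 1 <= t - r) by lra.
    pose proof (Rmax_l T1 T2). pose proof (Rmax_r T1 T2).
    split.
    + split.
      * exists (fun s => dx (t + s)). split.
        -- intros s Hs. apply cw_shift; [lra|]. apply Hcont. unfold Iseg in Hs. lra.
        -- intros s Hs. apply dw_shift; [lra|]. apply Hder. unfold Iseg in Hs. lra.
      * rewrite <- (Hode t) by lra. apply dw_shift; [lra|]. rewrite Rplus_0_r. apply Hder. lra.
    + exists (Rmin (c1 / (4 * gamma)) (Rmin (c2 / (2 * gamma)) (3 * c2 / 2))).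
      assert (Hq1 : 0 < c1 / (4 * gamma)) by (apply Rdiv_lt_0_compat; lra).
      assert (Hq2 : 0 < c2 / (2 * gamma)) by (apply Rdiv_lt_0_compat; lra).
      pose proof (Rmin_l (c1 / (4 * gamma)) (Rmin (c2 / (2 * gamma)) (3 * c2 / 2))).
      pose proof (Rmin_r (c1 / (4 * gamma)) (Rmin (c2 / (2 * gamma)) (3 * c2 / 2))).
      pose proof (Rmin_l (c2 / (2 * gamma)) (3 * c2 / 2)).
      pose proof (Rmin_r (c2 / (2 * gamma)) (3 * c2 / 2)).
      split.
      { apply Rmin_pos; [lra|]. apply Rmin_pos; lra. }
      intros s Hs. unfold Iseg in Hs.
      rewrite (dseg_eq r (segment x t) s (dx (t + s)) Hr0 ltac:(unfold Iseg; lra)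
        ltac:(apply dw_shift; [lra|]; apply Hder; lra)).
      unfold segment.
      specialize (HB1 (t + s) ltac:(lra)). specialize (HB2 (t + s) ltac:(lra)).
      cbv beta in HB2.
      pose proof (HH (t + s) ltac:(lra)) as Hts.
      assert (E1 : c1 / gamma - c1 / (4 * gamma) = L + c1 / (4 * gamma)) by (unfold L; field; lra).
      assert (E2 : - c2 / gamma - c2 / (2 * gamma) = - (U - c2 / (2 * gamma))) by (unfold U; field; lra).
      assert (E3 : gamma * (c1 / gamma - c1 / (4 * gamma)) = 3 * c1 / 4) by (field; lra).
      assert (E4 : gamma * (- c2 / gamma - c2 / (2 * gamma)) = - (3 * c2 / 2)) by (field; lra).
      assert (Hg1 : 3 * c1 / 4 <= gamma * x (t + s)) by (rewrite <- E3; apply Rmult_le_compat_l; lra).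
      assert (Hg2 : gamma * - x (t + s) >= - (3 * c2 / 2)) by (rewrite <- E4; apply Rmult_ge_compat_l; lra).
      split; [split|].
      * lra.
      * lra.
      * unfold K. apply Rabs_le. lra.
Qed.
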